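(* Let $\tau=e^{2\pi i/3}$ and define on $\mathbb{C}$ the maps $q_1(t)=-t-1$, $q_\tau(t)=-t-\tau$, $q_{\tau^2}(t)=-t-\tau^2$. Consider the infinite directed graph with vertices $a_{i,j}$ (row $1$: $a_{1,1}$; rows $2,3$: $a_{i,1},a_{i,2}$; for $i\ge4$, $1\le j\le \frac i2+1$ if $i$ even and $1\le j\le\frac{i-1}{2}+1$ if $i$ odd) and labelled edges: $a_{1,1}\to a_{2,1}$ labelled $q_\tau$, $a_{1,1}\to a_{2,2}$ labelled $q_{\tau^2}$; for every $k\ge1$ and $1\le j\le k+1$: $a_{2k,j}\to a_{2k+1,j}$ labelled $q_1$, $a_{2k+1,j}\to a_{2k+2,j}$ labelled $q_\tau$, $a_{2k+1,j}\to a_{2k+2,j+1}$ labelled $q_{\tau^2}$. Assign $t(1,1)=-2$ and, for a vertex $a_{i,j}$, let $t(i,j)$ be the value obtained from $-2$ by applying successively the maps labelling the edges of a directed path from $a_{1,1}$ to $a_{i,j}$. Then \[t(1,1)=-2,\quad t(2,1)=2-\tau,\quad t(3,1)=-3+\tau;\] for all $i\ge2$: \[t(2i,1)=t(2,1)+(i-1)(1-\tau),\qquad t(2i+1,1)=t(3,1)-(i-1)(1-\tau);\] and for all $i\ge2$ and $2\le j\le i+1$: \[t(2i,j)=t(2i,1)+(j-1)(1+2\tau),\qquad t(2i+1,j)=t(2i+1,1)-(j-1)(1+2\tau).\]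
   Context: In the paper, $t(i,j)$ is the parameter of the elliptic pencil (member of Lins Neto's family of foliations $\Omega+t\,\Xi=0$) at entry $a_{i,j}$ of a diagram of bifurcations of quadratic Cremona maps $Q_1,Q_\tau,Q_{\tau^2}$ preserving the dual Hesse arrangement, starting from the pencil with parameter $-2$; the strict transform under $Q_1,Q_\tau,Q_{\tau^2}$ changes the parameter by $q_1,q_\tau,q_{\tau^2}$ respectively, which is the recursion stated above. Note $1+\tau+\tau^2=0$. *)

(* Defs.v *)
From HB Require Import structures.
From mathcomp Require Import all_boot all_order all_algebra all_field.
Set Implicit Arguments. Unset Strict Implicit. Unset Printing Implicit Defensive.
Import Order.TTheory GRing.Theory Num.Theory.
Local Open Scope ring_scope.

(* tau = e^{2 pi i / 3} = -1/2 + i sqrt(3)/2 *)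
Definition tau : algC := - (1 / 2%:R) + 'i * (sqrtC 3%:R / 2%:R).

Definition q1 (t : algC) : algC := - t - 1.
Definition qtau (t : algC) : algC := - t - tau.
Definition qtau2 (t : algC) : algC := - t - tau ^+ 2.

(* Labelled edges of the diagram: edge i j i' j' f  means a_{i,j} -> a_{i',j'}
   labelled by f. *)
Inductive edge : nat -> nat -> nat -> nat -> (algC -> algC) -> Prop :=
| edge_11_21 : edge 1 1 2 1 qtau
| edge_11_22 : edge 1 1 2 2 qtau2
| edge_even_odd k j : (1 <= k)%N -> (1 <= j <= k.+1)%N ->
    edge (2 * k) j (2 * k + 1) j q1
| edge_odd_even k j : (1 <= k)%N -> (1 <= j <= k.+1)%N ->
    edge (2 * k + 1) j (2 * k + 2) j qtau
| edge_odd_even' k j : (1 <= k)%N -> (1 <= j <= k.+1)%N ->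
    edge (2 * k + 1) j (2 * k + 2) j.+1 qtau2.

Inductive path_value : nat -> nat -> algC -> Prop :=
| pv_start : path_value 1 1 (-2)
| pv_step i j i' j' f v : path_value i j v -> edge i j i' j' f ->
    path_value i' j' (f v).

(* t(i,j) = v : t(i,j) is well defined (a path exists and every path gives the
   same value) and equals v. *)
Definition t_is (i j : nat) (v : algC) : Prop :=
  path_value i j v /\ forall w, path_value i j w -> w = v.

(* Main.v *)
Require Import Defs.
From HB Require Import structures.
From mathcomp Require Import all_boot all_order all_algebra all_field.
From mathcomp Require Import ring lra zify.
Import Order.TTheory GRing.Theory Num.Theory.
Local Open Scope ring_scope.

Lemma tau2 : tau ^+ 2 = - 1 - tau.
Proof.
have HE : tau ^+ 2 + tau + 1 = (1 + ('i * sqrtC 3%:R) ^+ 2) / 4%:R + 1 / 2%:R.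
  by rewrite /tau; field.
have : tau ^+ 2 + tau + 1 = 0.
  by rewrite HE exprMn sqrCi sqrtCK; field.
move=> H; apply/eqP; rewrite -subr_eq0; apply/eqP; rewrite -H; ring.
Qed.

Definition E (k j : nat) : algC :=
  (2%:R - tau) + (k%:R - 1) * (1 - tau) + (j%:R - 1) * (1 + 2%:R * tau).
Definition T (i j : nat) : algC := if odd i then - E i./2 j - 1 else E i./2 j.

Lemma odd2 k : odd (2 * k) = false. Proof. by rewrite oddM. Qed.
Lemma odd21 k : odd (2 * k + 1) = true. Proof. by rewrite addn1 /= oddM. Qed.
Lemma odd22 k : odd (2 * k + 2) = false. Proof. by rewrite oddD oddM. Qed.
Lemma half2 k : (2 * k)./2 = k. Proof. by rewrite mul2n doubleK. Qed.
Lemma half21 k : (2 * k + 1)./2 = k. Proof. by rewrite addn1 /= mul2n uphalf_double. Qed.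
Lemma half22 k : (2 * k + 2)./2 = k.+1. Proof. by rewrite addn2 /= mul2n doubleK. Qed.

Lemma uniq_T i j v : path_value i j v -> v = T i j.
Proof.
elim=> [|{}i {}j i' j' f {}v _ -> e]; first by rewrite /T [odd 1]/= [1./2]/= /E; ring.
case: e => [||k {}j _ _|k {}j _ _|k {}j _ _].
- by rewrite /T [odd 1]/= [1./2]/= [odd 2]/= [2./2]/= /E /qtau; ring.
- by rewrite /T [odd 1]/= [1./2]/= [odd 2]/= [2./2]/= /E /qtau2 tau2; ring.
- by rewrite /T odd2 odd21 half2 half21 /q1.
- by rewrite /T odd21 odd22 half21 half22 /qtau /E -[k.+1%:R]natr1; ring.
- by rewrite /T odd21 odd22 half21 half22 /qtau2 tau2 /E -[k.+1%:R]natr1 -[j.+1%:R]natr1; ring.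
Qed.

Lemma reach k : (1 <= k)%N -> forall j, (1 <= j <= k.+1)%N ->
  (exists v, path_value (2 * k) j v) /\ (exists v, path_value (2 * k + 1) j v).
Proof.
elim: k => [//|k IH] _ j Hj.
suff H : exists v, path_value (2 * k.+1) j v.
  split=> //; case: H => v Hv; exists (q1 v); apply: pv_step Hv _; exact: edge_even_odd.
case: k IH Hj => [|k] IH Hj.
  have [->|->] : j = 1%N \/ j = 2%N by lia.
  - exists (qtau (-2)); apply: pv_step; [exact: pv_start| exact: edge_11_21].
  - exists (qtau2 (-2)); apply: pv_step; [exact: pv_start| exact: edge_11_22].
have -> : (2 * k.+2 = 2 * k.+1 + 2)%N by lia.
have [Hj'|Hj'] : (j <= k.+2)%N \/ j = k.+3 by lia.
- have [_ [v Hv]] := IH isT j ltac:(lia).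
  exists (qtau v); apply: pv_step Hv _; apply: edge_odd_even => //; lia.
- have [_ [v Hv]] := IH isT k.+2 ltac:(lia).
  exists (qtau2 v); rewrite Hj'; apply: pv_step Hv _; apply: edge_odd_even' => //; lia.
Qed.

Lemma tis i j : (exists v, path_value i j v) -> t_is i j (T i j).
Proof.
case=> v Hv; have E' := uniq_T _ _ _ Hv; split; first by rewrite -E'.
exact: uniq_T.
Qed.

Lemma tis' i j v : (exists v, path_value i j v) -> v = T i j -> t_is i j v.
Proof. by move=> H ->; apply: tis. Qed.

Theorem mainTheorem2 :
  t_is 1 1 (-2) /\
  t_is 2 1 (2%:R - tau) /\
  t_is 3 1 (- 3%:R + tau) /\
  (forall i : nat, (2 <= i)%N ->
     t_is (2 * i) 1 ((2%:R - tau) + (i%:R - 1) * (1 - tau)) /\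
     t_is (2 * i + 1) 1 ((- 3%:R + tau) - (i%:R - 1) * (1 - tau))) /\
  (forall i j : nat, (2 <= i)%N -> (2 <= j <= i + 1)%N ->
     t_is (2 * i) j
       (((2%:R - tau) + (i%:R - 1) * (1 - tau)) + (j%:R - 1) * (1 + 2%:R * tau)) /\
     t_is (2 * i + 1) j
       (((- 3%:R + tau) - (i%:R - 1) * (1 - tau)) - (j%:R - 1) * (1 + 2%:R * tau))).
Proof.
split.
  apply: tis'; first by exists (-2); exact: pv_start.
  by rewrite /T [odd 1]/= [1./2]/= /E; ring.
split.
  apply: tis'; first by case: (reach 1 isT 1 isT).
  by rewrite /T [odd 2]/= [2./2]/= /E; ring.
split.
  apply: tis'; first by case: (reach 1 isT 1 isT).
  by rewrite /T [odd 3]/= [3./2]/= /E; ring.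
split.
  move=> i Hi; have [H1 H2] := reach i ltac:(lia) 1 ltac:(lia).
  split; apply: tis' => //.
    by rewrite /T odd2 half2 /E; ring.
  by rewrite /T odd21 half21 /E; ring.
move=> i j Hi Hj; have [H1 H2] := reach i ltac:(lia) j ltac:(lia).
split; apply: tis' => //.
  by rewrite /T odd2 half2 /E; ring.
by rewrite /T odd21 half21 /E; ring.
Qed.
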